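(* Let $\lambda>0$, $\lambda_{max}>0$, $p\in(0,1)$, let $B\ge1$ be an integer, and let $f_B:[0,1]\to\mathbb{R}$ be as defined in the context. For $q,\tilde q\in[0,1]$ let $\mathrm{TH}_B(q,\tilde q)=f_B(q)\exp\!\big(-\frac{\lambda f_B(\tilde q)}{\lambda_{max}}\big)$, and call $q^*\in[0,1]$ a symmetric Nash equilibrium (SNE) if $\mathrm{TH}_B(q^*,q^* )=\max_{q\in[0,1]}\mathrm{TH}_B(q,q^* )$. Then $q^*=1$ is an SNE. At any SNE $q^*$, $\mathrm{TH}_B(q^*,q^* )=p\exp\!\big(-\frac{p\lambda}{\lambda_{max}}\big)$ and the transmission capacity $C=\lambda\,\mathrm{TH}_B(q^*,q^* )$ equals $\lambda p\exp\!\big(-\frac{p\lambda}{\lambda_{max}}\big)$.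
   Context: For $q\in(0,1]$ define $r_B(q)$ by: if $B=1$, $r_1(q)=\frac{p}{p+q-pq}$; if $B>1$ and $q\ne p$, $r_B(q)=\frac{\frac{p}{q}(1-\rho^B)}{1-\frac{p}{q}\rho^B}$ with $\rho=\frac{p(1-q)}{q(1-p)}$; if $B>1$ and $q=p$, $r_B(p)=\frac{B}{B+1-p}$. Set $f_B(q)=q\,r_B(q)$ for $q\in(0,1]$ and $f_B(0)=0$. Interpretation: transmitters form a homogeneous Poisson point process of density $\lambda$ in $\mathbb{R}^2$, harvest one energy unit per slot with probability $p$ into a battery of capacity $B$, and transmit with their own ALOHA probability when the battery is nonempty; $\mathrm{TH}_B(q,\tilde q)$ is the throughput of a transmitter using $q$ when all others use $\tilde q$; $\lambda_{max}=\frac{1}{d^2\theta^{2/\alpha}\kappa(\alpha)}$, $\kappa(\alpha)=\frac{2\pi^2}{\alpha\sin(2\pi/\alpha)}$. *)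

(* Defs.v *)
From Stdlib Require Import Reals.
Open Scope R_scope.

Definition rho (p q : R) : R := p * (1 - q) / (q * (1 - p)).

Definition r_B (p : R) (B : nat) (q : R) : R :=
  if Nat.eqb B 1 then p / (p + q - p * q)
  else if Req_EM_T q p then INR B / (INR B + 1 - p)
  else (p / q) * (1 - rho p q ^ B) / (1 - (p / q) * rho p q ^ B).

Definition f_B (p : R) (B : nat) (q : R) : R :=
  if Req_EM_T q 0 then 0 else q * r_B p B q.

Definition TH (lam lam_max p : R) (B : nat) (q qt : R) : R :=
  f_B p B q * exp (- (lam * f_B p B qt / lam_max)).

Definition SNE (lam lam_max p : R) (B : nat) (qs : R) : Prop :=
  0 <= qs <= 1 /\
  forall q, 0 <= q <= 1 -> TH lam lam_max p B q qs <= TH lam lam_max p B qs qs.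

(* Main.v *)
Require Import Defs.
From Stdlib Require Import Reals Lra Psatz.
Open Scope R_scope.

Lemma key (p q x : R) : 0 < p < 1 -> 0 < q <= 1 -> q <> p ->
  (p < q -> 0 <= x < 1) -> (q < p -> 1 < x) ->
  q * ((p / q) * (1 - x) / (1 - (p / q) * x)) <= p.
Proof.
  intros Hp Hq Hne H1 H2.
  assert (Ha : (p / q) * q = p) by (field; lra).
  generalize dependent (p / q). intros a Ha.
  destruct (Rlt_or_le p q) as [Hlt|Hge].
  - specialize (H1 Hlt).
    assert (a < 1) by nra.
    assert (a >= 0) by nra.
    assert (Hd : 0 < 1 - a * x) by nra.
    assert (E : q * (a * (1 - x) / (1 - a * x)) = p - p * x * (1 - a) / (1 - a * x))
      by (rewrite <- Ha; field; lra).
    rewrite E.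
    assert (0 <= p * x * (1 - a) / (1 - a * x)).
    { unfold Rdiv; apply Rmult_le_pos; [apply Rmult_le_pos; [apply Rmult_le_pos|]; lra| left; apply Rinv_0_lt_compat; lra]. }
    lra.
  - assert (Hlt : q < p) by lra.
    specialize (H2 Hlt).
    assert (a > 1) by nra.
    assert (Hd : 1 - a * x < 0) by nra.
    assert (E : q * (a * (1 - x) / (1 - a * x)) = p - p * x * (a - 1) / (- (1 - a * x)))
      by (rewrite <- Ha; field; lra).
    rewrite E.
    assert (0 <= p * x * (a - 1) / (- (1 - a * x))).
    { unfold Rdiv; apply Rmult_le_pos; [apply Rmult_le_pos; [apply Rmult_le_pos|]; lra| left; apply Rinv_0_lt_compat; lra]. }
    lra.
Qed.

Lemma fB_le (p : R) (B : nat) (q : R) : 0 < p < 1 -> (1 <= B)%nat -> 0 <= q <= 1 ->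
  f_B p B q <= p.
Proof.
  intros Hp HB Hq. unfold f_B.
  destruct (Req_EM_T q 0) as [H0|H0]; [lra|].
  assert (Hq' : 0 < q <= 1) by lra.
  unfold r_B.
  destruct (Nat.eqb B 1).
  - assert (0 < p + q - p * q) by nra.
    assert (E : q * (p / (p + q - p * q)) = p - p * (p * (1 - q)) / (p + q - p * q))
      by (field; lra).
    rewrite E.
    assert (0 <= p * (p * (1 - q)) / (p + q - p * q)).
    { unfold Rdiv; apply Rmult_le_pos; [nra| left; apply Rinv_0_lt_compat; lra]. }
    lra.
  - destruct (Req_EM_T q p) as [Hqp|Hqp].
    + subst q. assert (HBr : 1 <= INR B) by (apply (le_INR 1); lia).
      assert (E : p * (INR B / (INR B + 1 - p)) = p - p * (1 - p) / (INR B + 1 - p))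
        by (field; lra).
      rewrite E.
      assert (0 <= p * (1 - p) / (INR B + 1 - p)).
      { unfold Rdiv; apply Rmult_le_pos; [nra| left; apply Rinv_0_lt_compat; lra]. }
      lra.
    + apply key; auto.
      * intro Hlt. apply pow_lt_1_compat; [|lia]. unfold rho. split.
        -- unfold Rdiv; apply Rmult_le_pos; [nra| left; apply Rinv_0_lt_compat; nra].
        -- assert (0 < q * (1 - p)) by nra.
           apply (Rmult_lt_reg_r (q * (1 - p))); auto.
           unfold Rdiv; rewrite Rmult_assoc, Rinv_l; nra.
      * intro Hlt. apply Rlt_pow_R1; [|lia]. unfold rho.
        assert (0 < q * (1 - p)) by nra.
        apply (Rmult_lt_reg_r (q * (1 - p))); auto.
        unfold Rdiv; rewrite Rmult_assoc, Rinv_l; nra.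
Qed.

Lemma fB_1 (p : R) (B : nat) : 0 < p < 1 -> (1 <= B)%nat -> f_B p B 1 = p.
Proof.
  intros Hp HB. unfold f_B, r_B.
  destruct (Req_EM_T 1 0); [lra|].
  destruct (Nat.eqb B 1). { field; lra. }
  destruct (Req_EM_T 1 p); [lra|].
  assert (Hr : rho p 1 = 0) by (unfold rho; field; lra).
  rewrite Hr. destruct B; [lia|]. simpl. field.
Qed.

Theorem theorem4 (lam lam_max p : R) (B : nat) :
  0 < lam -> 0 < lam_max -> 0 < p < 1 -> (1 <= B)%nat ->
  SNE lam lam_max p B 1 /\
  (forall qs, SNE lam lam_max p B qs ->
     TH lam lam_max p B qs qs = p * exp (- (p * lam / lam_max)) /\
     lam * TH lam lam_max p B qs qs = lam * p * exp (- (p * lam / lam_max))).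
Proof.
  intros Hl Hm Hp HB.
  split.
  - split; [lra|]. intros q Hq. unfold TH.
    apply Rmult_le_compat_r; [left; apply exp_pos|].
    rewrite fB_1 by auto. apply fB_le; auto.
  - intros qs [Hqs Hmax].
    specialize (Hmax 1 ltac:(lra)). unfold TH in Hmax.
    rewrite fB_1 in Hmax by auto.
    pose proof (exp_pos (- (lam * f_B p B qs / lam_max))).
    assert (p <= f_B p B qs) by (apply (Rmult_le_reg_r (exp (- (lam * f_B p B qs / lam_max)))); auto).
    pose proof (fB_le p B qs Hp HB Hqs).
    assert (Hf : f_B p B qs = p) by lra.
    unfold TH. rewrite Hf.
    replace (lam * p / lam_max) with (p * lam / lam_max) by (field; lra).
    split; ring.
Qed.
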